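(* $W^+$ is a normal subgroup of $G$, and the cosets of $W^+$ in $G$ are $W^+$, $\tau_xW^+$, $\tau_yW^+$, $\tau_zW^+$, $\varrho W^+$, $\varrho^2W^+$. The quotient $G/W^+$ is isomorphic to the symmetric group $S_3$.
   Context: $\mathbb F$ is a field of characteristic zero, $\mathfrak{sl}_2$ the Lie algebra of $2\times2$ trace-zero matrices over $\mathbb F$ with trace form $(u,v)=\mathrm{tr}(uv)$. Equitable basis: $x=\begin{pmatrix}1&0\\0&-1\end{pmatrix}$, $y=\begin{pmatrix}-1&2\\0&1\end{pmatrix}$, $z=\begin{pmatrix}-1&0\\-2&1\end{pmatrix}$. Let $x^*=\begin{pmatrix}1&-1\\1&-1\end{pmatrix}$, $y^*=\begin{pmatrix}0&0\\1&0\end{pmatrix}$, $z^*=\begin{pmatrix}0&-1\\0&0\end{pmatrix}$, and $\sigma_x=\exp(\mathrm{ad}\,x^* )$, $\sigma_y=\exp(\mathrm{ad}\,y^* )$, $\sigma_z=\exp(\mathrm{ad}\,z^* )$. $G=\langle\sigma_x,\sigma_y,\sigma_z\rangle\subseteq\mathrm{Aut}_{\mathbb F}(\mathfrak{sl}_2)$. $\varrho$ is the automorphism of $\mathfrak{sl}_2$ with $\varrho(x)=y,\varrho(y)=z,\varrho(z)=x$ (it equals $\sigma_x\sigma_y$). $\tau_x=\sigma_y\sigma_z\sigma_y$, $\tau_y=\sigma_z\sigma_x\sigma_z$, $\tau_z=\sigma_x\sigma_y\sigma_x$. For $u\in\{x,y,z\}$, $r_u(v)=v-(u,v)u$; $W=\langle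 r_x,r_y,r_z\rangle$, and $W^+$ is the subgroup of elements of $W$ of even length with respect to the generators $r_x,r_y,r_z$. *)

(* Defs.v *)
From HB Require Import structures.
From mathcomp Require Import all_boot all_order all_algebra all_fingroup.
Set Implicit Arguments. Unset Strict Implicit. Unset Printing Implicit Defensive.
Import GRing.Theory.
Local Open Scope ring_scope.

Section Defs.
Variable F : fieldType.

Definition mx2 (a b c d : F) : 'M[F]_2 :=
  \matrix_(i < 2, j < 2)
     if (i : nat) == 0%N then (if (j : nat) == 0%N then a else b)
     else (if (j : nat) == 0%N then c else d).

Definition ex : 'M[F]_2 := mx2 1 0 0 (-1).
Definition ey : 'M[F]_2 := mx2 (-1) 2 0 1.
Definition ez : 'M[F]_2 := mx2 (-1) 0 (-2) 1.
Definition xs : 'M[F]_2 := mx2 1 (-1) 1 (-1).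
Definition ys : 'M[F]_2 := mx2 0 0 1 0.
Definition zs : 'M[F]_2 := mx2 0 (-1) 0 0.

Definition in_sl2 (v : 'M[F]_2) : Prop := \tr v = 0.
Definition trform (u v : 'M[F]_2) : F := \tr (u *m v).

Definition ad (a v : 'M[F]_2) : 'M[F]_2 := a *m v - v *m a.

(* exp(ad a) for nilpotent a : (ad a)^3 = 0, so the exponential series
   is the finite sum  sum_{n<3} (ad a)^n / n! *)
Definition expad (a : 'M[F]_2) (v : 'M[F]_2) : 'M[F]_2 :=
  \sum_(n < 3) ((n`!)%:R)^-1 *: iter n (ad a) v.

Definition sigma_x := expad xs.
Definition sigma_y := expad ys.
Definition sigma_z := expad zs.

(* equality of automorphisms of sl_2 : agreement on sl_2 *)
Definition eqsl (f g : 'M[F]_2 -> 'M[F]_2) : Prop :=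
  forall v, in_sl2 v -> f v = g v.

(* generators of G and of W, indexed by 'I_3 : 0 ~ x, 1 ~ y, 2 ~ z *)
Definition star (i : 'I_3) : 'M[F]_2 :=
  if (i : nat) == 0%N then xs else if (i : nat) == 1%N then ys else zs.
Definition equi (i : 'I_3) : 'M[F]_2 :=
  if (i : nat) == 0%N then ex else if (i : nat) == 1%N then ey else ez.

(* a letter (i, true) is sigma_i, (i, false) is sigma_i^{-1} = exp(ad(-i^star)) *)
Definition gletter (l : 'I_3 * bool) : 'M[F]_2 -> 'M[F]_2 :=
  if l.2 then expad (star l.1) else expad (- star l.1).
Definition gword (w : seq ('I_3 * bool)) : 'M[F]_2 -> 'M[F]_2 :=
  foldr (fun l acc => gletter l \o acc) id w.
Definition inG (f : 'M[F]_2 -> 'M[F]_2) : Prop :=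
  exists w, eqsl f (gword w).

Definition refl (u v : 'M[F]_2) : 'M[F]_2 := v - trform u v *: u.
Definition wword (w : seq 'I_3) : 'M[F]_2 -> 'M[F]_2 :=
  foldr (fun i acc => refl (equi i) \o acc) id w.
(* W = < r_x, r_y, r_z > (the r_u are involutions) *)
Definition inW (f : 'M[F]_2 -> 'M[F]_2) : Prop :=
  exists w, eqsl f (wword w).
Definition inWp (f : 'M[F]_2 -> 'M[F]_2) : Prop :=
  exists w, ~~ odd (size w) /\ eqsl f (wword w).

Definition rho := sigma_x \o sigma_y.
Definition tau_x := sigma_y \o sigma_z \o sigma_y.
Definition tau_y := sigma_z \o sigma_x \o sigma_z.
Definition tau_z := sigma_x \o sigma_y \o sigma_x.

Definition coset_rep (i : 'I_6) : 'M[F]_2 -> 'M[F]_2 :=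
  nth id [:: id; tau_x; tau_y; tau_z; rho; rho \o rho] i.

End Defs.

(* Main.v *)
Require Import Defs.
From Stdlib Require Import ClassicalEpsilon.
From HB Require Import structures.
From mathcomp Require Import all_boot all_order all_algebra all_fingroup.
Set Implicit Arguments. Unset Strict Implicit. Unset Printing Implicit Defensive.
Import GRing.Theory.
Local Open Scope ring_scope.

Record m2 := M2 { p00 : int; p01 : int; p10 : int; p11 : int }.
Definition I2 (F : fieldType) (P : m2) : 'M[F]_2 :=
  mx2 (p00 P)%:~R (p01 P)%:~R (p10 P)%:~R (p11 P)%:~R.
Definition mul2 (P Q : m2) := M2 (p00 P * p00 Q + p01 P * p10 Q) (p00 P * p01 Q + p01 P * p11 Q)
  (p10 P * p00 Q + p11 P * p10 Q) (p10 P * p01 Q + p11 P * p11 Q).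
Definition add2 (P Q : m2) := M2 (p00 P + p00 Q) (p01 P + p01 Q) (p10 P + p10 Q) (p11 P + p11 Q).
Definition opp2 (P : m2) := M2 (- p00 P) (- p01 P) (- p10 P) (- p11 P).
Definition scl2 (k : int) (P : m2) := M2 (k * p00 P) (k * p01 P) (k * p10 P) (k * p11 P).

Lemma ord2_cases (i : 'I_2) : i = ord0 \/ i = ord_max.
Proof. by case: i => [[|[|i]] Hi]; [left|right|]; try apply: val_inj. Qed.

Lemma mx2P (F : fieldType) (A B : 'M[F]_2) :
  A ord0 ord0 = B ord0 ord0 -> A ord0 ord_max = B ord0 ord_max ->
  A ord_max ord0 = B ord_max ord0 -> A ord_max ord_max = B ord_max ord_max -> A = B.
Proof.
move=> h1 h2 h3 h4; apply/matrixP => i j.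
by case: (ord2_cases i) => ->; case: (ord2_cases j) => ->.
Qed.

Lemma mx2E (F : fieldType) (a b c d : F) :
  (mx2 a b c d ord0 ord0 = a) * (mx2 a b c d ord0 ord_max = b) *
  (mx2 a b c d ord_max ord0 = c) * (mx2 a b c d ord_max ord_max = d).
Proof. by rewrite /mx2 !mxE. Qed.

Lemma sum2 (F : fieldType) (f : 'I_2 -> F) : \sum_(k < 2) f k = f ord0 + f ord_max.
Proof. by rewrite big_ord_recr big_ord_recr big_ord0 /= add0r; congr (f _ + f _); apply: val_inj. Qed.

Lemma I2M (F : fieldType) P Q : I2 F P *m I2 F Q = I2 F (mul2 P Q).
Proof.
by apply: mx2P; rewrite !mxE !sum2 !mxE /= ?intrD ?intrM.
Qed.
Lemma I2D (F : fieldType) P Q : I2 F P + I2 F Q = I2 F (add2 P Q).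
Proof. by apply: mx2P; rewrite !mxE /= ?intrD. Qed.
Lemma I2N (F : fieldType) P : - I2 F P = I2 F (opp2 P).
Proof. by apply: mx2P; rewrite !mxE /= ?intrN. Qed.
Lemma I2Z (F : fieldType) k P : k%:~R *: I2 F P = I2 F (scl2 k P).
Proof. by apply: mx2P; rewrite !mxE /= ?intrM. Qed.
Lemma I2tr (F : fieldType) P : \tr (I2 F P) = (p00 P + p11 P)%:~R.
Proof. by rewrite /mxtrace sum2 !mxE /= intrD. Qed.

Definition o0 : 'I_3 := @Ordinal 3 0 isT.
Definition o1 : 'I_3 := @Ordinal 3 1 isT.
Definition o2 : 'I_3 := @Ordinal 3 2 isT.

Lemma ord3_cases (i : 'I_3) : [\/ i = o0, i = o1 | i = o2].
Proof.
case: i => [[|[|[|i]]] Hi].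
- by apply: Or31; apply: val_inj.
- by apply: Or32; apply: val_inj.
- by apply: Or33; apply: val_inj.
- by [].
Qed.

Lemma sum3 (V : nmodType) (f : 'I_3 -> V) : \sum_(k < 3) f k = f o0 + f o1 + f o2.
Proof.
rewrite !big_ord_recr big_ord0 /= add0r.
by congr (f _ + f _ + f _); apply: val_inj.
Qed.

Definition cy (F : fieldType) (v : 'M[F]_2) : F := v ord0 ord_max / 2.
Definition cz (F : fieldType) (v : 'M[F]_2) : F := - (v ord_max ord0 / 2).
Definition cx (F : fieldType) (v : 'M[F]_2) : F := v ord0 ord0 + cy v + cz v.
Definition cc (F : fieldType) (v : 'M[F]_2) (j : 'I_3) : F :=
  if (j : nat) == 0%N then cx v else if (j : nat) == 1%N then cy v else cz v.

Lemma ccD (F : fieldType) (u w : 'M[F]_2) j : cc (u + w) j = cc u j + cc w j.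
Proof.
have hy : cy (u + w) = cy u + cy w by rewrite /cy !mxE mulrDl.
have hz : cz (u + w) = cz u + cz w by rewrite /cz !mxE mulrDl opprD.
rewrite /cc; case: ((j:nat) == 0%N); last case: ((j:nat) == 1%N); rewrite // ?hy ?hz //.
by rewrite /cx hy hz !mxE (addrACA (u ord0 ord0)) [LHS]addrACA.
Qed.

Lemma ccZ (F : fieldType) (k : F) (u : 'M[F]_2) j : cc (k *: u) j = k * cc u j.
Proof.
have hy : cy (k *: u) = k * cy u by rewrite /cy !mxE mulrA.
have hz : cz (k *: u) = k * cz u by rewrite /cz !mxE mulrN mulrA.
rewrite /cc; case: ((j:nat) == 0%N); last case: ((j:nat) == 1%N); rewrite // ?hy ?hz //.
by rewrite /cx hy hz !mxE !mulrDr.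
Qed.

Lemma cc0 (F : fieldType) j : cc (0 : 'M[F]_2) j = 0.
Proof. by rewrite -(scale0r 0) ccZ mul0r. Qed.

Lemma cc_sum (F : fieldType) (I : Type) (r : seq I) (P : pred I) (f : I -> 'M[F]_2) j :
  cc (\sum_(i <- r | P i) f i) j = \sum_(i <- r | P i) cc (f i) j.
Proof. exact: (big_morph (fun v => cc v j) (fun u w => ccD u w j) (cc0 F j)). Qed.

Lemma two_neq0 (F : fieldType) : [pchar F] =i pred0 -> (2 : F) != 0.
Proof. by move/pcharf0P => h; rewrite h. Qed.

Lemma cc_equi (F : fieldType) : [pchar F] =i pred0 -> forall i j,
  cc (equi F i) j = (i == j)%:R.
Proof.
move=> h i j; have h2 := two_neq0 h.
case: (ord3_cases i) => ->; case: (ord3_cases j) => ->;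
  rewrite /cc /cx /cy /cz /equi /ex /ey /ez /mx2 /= !mxE /= ?mul0r ?oppr0 ?addr0 ?divff //.
- by rewrite addNr.
- by rewrite mulNr divff // opprK addNr.
- by rewrite mulNr divff // opprK.
Qed.

Lemma tr2 (F : fieldType) (v : 'M[F]_2) : \tr v = v ord0 ord0 + v ord_max ord_max.
Proof. by rewrite /mxtrace sum2. Qed.

Lemma decomp (F : fieldType) : [pchar F] =i pred0 -> forall v : 'M[F]_2,
  in_sl2 v -> v = \sum_(j < 3) cc v j *: equi F j.
Proof.
move=> h v; rewrite /in_sl2 tr2 => hv; have h2 := two_neq0 h.
rewrite sum3; apply: mx2P;
  rewrite /cc /= /equi /ex /ey /ez /mx2 !mxE /= ?mulr1 ?mulr0 ?add0r ?addr0 ?mulrN1 ?mulr1.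
- by rewrite /cx addrAC !addrK.
- by rewrite /cy divfK.
- by rewrite /cz mulrNN divfK.
- rewrite /cx; move/eqP: hv; rewrite addr_eq0 => /eqP ->.
  by rewrite !opprD opprK addrAC !addrNK.
Qed.

Record m3 (T : Type) := M3 { a00 : T; a01 : T; a02 : T; a10 : T; a11 : T; a12 : T;
  a20 : T; a21 : T; a22 : T }.

Definition get (T : Type) (A : m3 T) (i j : 'I_3) : T :=
  match (i : nat), (j : nat) with
  | 0, 0 => a00 A | 0, 1 => a01 A | 0, _ => a02 A
  | 1, 0 => a10 A | 1, 1 => a11 A | 1, _ => a12 A
  | _, 0 => a20 A | _, 1 => a21 A | _, _ => a22 A end.

Definition mul3 (R : pzRingType) (A B : m3 R) : m3 R :=
  let f i j := get A i o0 * get B o0 j + get A i o1 * get B o1 j + get A i o2 * get B o2 j in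
  M3 (f o0 o0) (f o0 o1) (f o0 o2) (f o1 o0) (f o1 o1) (f o1 o2) (f o2 o0) (f o2 o1) (f o2 o2).

Lemma get_mul3 (R : pzRingType) (A B : m3 R) i k :
  get (mul3 A B) i k = \sum_(j < 3) get A i j * get B j k.
Proof.
by rewrite sum3; case: (ord3_cases i) => ->; case: (ord3_cases k) => ->.
Qed.

Definition colF (F : fieldType) (A : m3 int) (j : 'I_3) : 'M[F]_2 :=
  \sum_(i < 3) (get A i j)%:~R *: equi F i.
Definition L (F : fieldType) (A : m3 int) (v : 'M[F]_2) : 'M[F]_2 :=
  \sum_(j < 3) cc v j *: @colF F A j.

Lemma cc_colF (F : fieldType) : [pchar F] =i pred0 -> forall A j k,
  cc (@colF F A k) j = (get A j k)%:~R.
Proof.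
move=> h A j k; rewrite /colF cc_sum.
under eq_bigr do rewrite ccZ (cc_equi h).
by rewrite sum3; case: (ord3_cases j) => -> /=; rewrite ?mulr0 ?mulr1 ?addr0 ?add0r.
Qed.

Lemma cc_L (F : fieldType) : [pchar F] =i pred0 -> forall A (v : 'M[F]_2) j,
  cc (@L F A v) j = \sum_(k < 3) cc v k * (get A j k)%:~R.
Proof.
move=> h A v j; rewrite /L cc_sum.
by apply: eq_bigr => k _; rewrite ccZ (cc_colF h).
Qed.

Lemma LL (F : fieldType) : [pchar F] =i pred0 -> forall A B (v : 'M[F]_2),
  @L F A (@L F B v) = @L F (mul3 A B) v.
Proof.
move=> h A B v; rewrite /L.
under eq_bigr do rewrite (cc_L h) /colF scaler_suml.
under [RHS]eq_bigr do rewrite /colF scaler_sumr.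
rewrite exchange_big /=.
apply: eq_bigr => k _.
under eq_bigr do rewrite scaler_sumr.
rewrite exchange_big /=.
apply: eq_bigr => i _.
rewrite get_mul3 rmorph_sum /= scalerA mulr_sumr scaler_suml.
apply: eq_bigr => j _.
by rewrite scalerA intrM (mulrC (get A i j)%:~R) mulrA.
Qed.

Lemma tr_equi (F : fieldType) i : \tr (equi F i) = 0.
Proof.
rewrite tr2; case: (ord3_cases i) => ->; rewrite /equi /ex /ey /ez /mx2 !mxE /=.
- by rewrite subrr.
- by rewrite addNr.
- by rewrite addNr.
Qed.

Lemma L_sl2 (F : fieldType) A (v : 'M[F]_2) : in_sl2 (@L F A v).
Proof.
have trS := big_morph _ (@mxtraceD F 2) (mxtrace0 F 2).
rewrite /in_sl2 /L trS big1 // => j _.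
rewrite mxtraceZ /colF trS big1 ?mulr0 // => i _.
by rewrite mxtraceZ tr_equi mulr0.
Qed.

Definition rep (F : fieldType) (f : 'M[F]_2 -> 'M[F]_2) (A : m3 int) := eqsl f (@L F A).

Lemma rep_sl2 (F : fieldType) f A v : @rep F f A -> in_sl2 v -> in_sl2 (f v).
Proof. by move=> hf hv; rewrite hf //; apply: L_sl2. Qed.

Lemma rep_comp (F : fieldType) : [pchar F] =i pred0 -> forall f g A B,
  @rep F f A -> @rep F g B -> @rep F (f \o g) (mul3 A B).
Proof.
move=> h f g A B hf hg v hv /=; rewrite hg // hf; last exact: L_sl2.
exact: LL.
Qed.

Definition lin (F : fieldType) (f : 'M[F]_2 -> 'M[F]_2) :=
  (forall u w, f (u + w) = f u + f w) /\ (forall (k : F) u, f (k *: u) = k *: f u).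

Lemma rep_of_lin (F : fieldType) : [pchar F] =i pred0 -> forall f A,
  @lin F f -> (forall j, f (equi F j) = @colF F A j) -> @rep F f A.
Proof.
move=> h f A [fD fZ] fe v hv.
have f0 : f 0 = 0 by have := fZ 0 0; rewrite !scale0r.
rewrite {1}(decomp h hv) (big_morph f fD f0) /L.
by apply: eq_bigr => j _; rewrite fZ fe.
Qed.

Definition E2 (a v : m2) : m2 :=
  add2 (add2 v (add2 (mul2 a v) (opp2 (mul2 v a)))) (opp2 (mul2 (mul2 a v) a)).

Lemma expad_nil (F : fieldType) : [pchar F] =i pred0 -> forall a v : 'M[F]_2,
  a *m a = 0 -> expad a v = v + (a *m v - v *m a) - a *m v *m a.
Proof.
move=> h a v haa; have h2 := two_neq0 h.
rewrite /expad !big_ord_recr big_ord0 /= add0r.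
rewrite /ad.
have -> : (a *m (a *m v - v *m a) - (a *m v - v *m a) *m a) = - (2 *: (a *m v *m a)).
  rewrite mulmxBr mulmxBl !mulmxA -(mulmxA v).
  have -> : a *m a = 0 by exact: haa.
  rewrite mul0mx mulmx0 sub0r subr0.
  by rewrite scaler_nat mulr2n opprD.
rewrite invr1 !scale1r scalerN scalerA mulVf //.
by rewrite scale1r.
Qed.

Lemma acl (V : zmodType) (x1 x2 y1 y2 z1 z2 t1 t2 : V) :
  (x1 + x2) + ((y1 + y2) - (z1 + z2)) - (t1 + t2) =
  (x1 + (y1 - z1) - t1) + (x2 + (y2 - z2) - t2).
Proof. by rewrite !opprD (addrACA y1) (addrACA x1) (addrACA (x1 + (y1 - z1))). Qed.

Lemma lin_nil (F : fieldType) (a : 'M[F]_2) :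
  @lin F (fun v => v + (a *m v - v *m a) - a *m v *m a).
Proof.
split.
- by move=> u w; rewrite mulmxDr !mulmxDl acl.
- by move=> k u; rewrite scalerBr scalerDr scalerBr (scalemxAl k (a *m u) a)
    (scalemxAl k u a) (scalemxAr k a u).
Qed.

Definition exi := M2 1 0 0 (-1).
Definition eyi := M2 (-1) 2 0 1.
Definition ezi := M2 (-1) 0 (-2) 1.
Definition xsi := M2 1 (-1) 1 (-1).
Definition ysi := M2 0 0 1 0.
Definition zsi := M2 0 (-1) 0 0.
Definition equii (i : 'I_3) := if (i : nat) == 0%N then exi else if (i : nat) == 1%N then eyi else ezi.
Definition stari (i : 'I_3) := if (i : nat) == 0%N then xsi else if (i : nat) == 1%N then ysi else zsi.
Definition lettI (l : 'I_3 * bool) := if l.2 then stari l.1 else opp2 (stari l.1).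
Definition colI (A : m3 int) j :=
  add2 (add2 (scl2 (get A o0 j) exi) (scl2 (get A o1 j) eyi)) (scl2 (get A o2 j) ezi).

Lemma equiE (F : fieldType) i : equi F i = I2 F (equii i).
Proof. by case: (ord3_cases i) => ->. Qed.
Lemma starE (F : fieldType) i : star F i = I2 F (stari i).
Proof. by case: (ord3_cases i) => ->. Qed.
Lemma gletterE (F : fieldType) l : @gletter F l = expad (I2 F (lettI l)).
Proof. by rewrite /gletter /lettI; case: l.2; rewrite starE // I2N. Qed.
Lemma colF_I2 (F : fieldType) A j : @colF F A j = I2 F (colI A j).
Proof. by rewrite /colF sum3 !equiE !I2Z !I2D. Qed.

Lemma I2_0 (F : fieldType) : I2 F (M2 0 0 0 0) = 0.
Proof. by apply: mx2P; rewrite !mxE. Qed.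

Lemma expadI2 (F : fieldType) : [pchar F] =i pred0 -> forall a v,
  mul2 a a = M2 0 0 0 0 -> expad (I2 F a) (I2 F v) = I2 F (E2 a v).
Proof.
move=> h a v haa; rewrite expad_nil //; last by rewrite I2M haa I2_0.
by rewrite !I2M !I2N !I2D.
Qed.

Lemma lin_expad (F : fieldType) : [pchar F] =i pred0 -> forall a : 'M[F]_2,
  a *m a = 0 -> @lin F (expad a).
Proof.
move=> h a haa; have [hD hZ] := lin_nil a.
split.
- by move=> u w; rewrite !(expad_nil h _ haa); apply: hD.
- by move=> k u; rewrite !(expad_nil h _ haa); apply: hZ.
Qed.

Definition Al (l : 'I_3 * bool) : m3 int :=
  match (l.1 : nat), l.2 with
  | 0, true => M3 1 0 0 2 2 (-1) 0 1 0
  | 0, false => M3 1 0 0 0 0 1 2 (-1) 2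
  | 1, true => M3 0 0 1 0 1 0 (-1) 2 2
  | 1, false => M3 2 2 (-1) 0 1 0 1 0 0
  | _, true => M3 2 (-1) 2 1 0 0 0 0 1
  | _, false => M3 0 1 0 (-1) 2 2 0 0 1
  end.

Lemma letter_rep (F : fieldType) : [pchar F] =i pred0 -> forall l,
  @rep F (gletter l) (Al l).
Proof.
move=> h l; rewrite gletterE.
have hsq : mul2 (lettI l) (lettI l) = M2 0 0 0 0.
  by case: l => i b; case: (ord3_cases i) => ->; case: b; vm_compute.
apply: (rep_of_lin h).
  by apply: (lin_expad h); rewrite I2M hsq I2_0.
move=> j; rewrite equiE expadI2 // colF_I2; congr (I2 F _).
by case: l hsq => i b; case: (ord3_cases i) => ->; case: b; case: (ord3_cases j) => ->; vm_compute.
Qed.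

Definition Rm (i : 'I_3) : m3 int :=
  match (i : nat) with
  | 0 => M3 (-1) 2 2 0 1 0 0 0 1
  | 1 => M3 1 0 0 2 (-1) 2 0 0 1
  | _ => M3 1 0 0 0 1 0 2 2 (-1)
  end.

Lemma lin_refl (F : fieldType) (u : 'M[F]_2) : @lin F (refl u).
Proof.
rewrite /refl /trform; split.
- by move=> v w; rewrite mulmxDr mxtraceD scalerDl opprD addrACA.
- by move=> k v; rewrite -scalemxAr mxtraceZ scalerBr scalerA.
Qed.

Lemma reflI2 (F : fieldType) u v :
  refl (I2 F u) (I2 F v) = I2 F (add2 v (opp2 (scl2 (p00 (mul2 u v) + p11 (mul2 u v)) u))).
Proof. by rewrite /refl /trform I2M I2tr I2Z I2N I2D. Qed.

Lemma refl_rep (F : fieldType) : [pchar F] =i pred0 -> forall i,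
  @rep F (refl (equi F i)) (Rm i).
Proof.
move=> h i; apply: (rep_of_lin h); first exact: lin_refl.
move=> j; rewrite !equiE reflI2 colF_I2; congr (I2 F _).
by case: (ord3_cases i) => ->; case: (ord3_cases j) => ->; vm_compute.
Qed.

Definition id3 : m3 int := M3 1 0 0 0 1 0 0 0 1.
Definition Gm (w : seq ('I_3 * bool)) : m3 int := foldr (fun l acc => mul3 (Al l) acc) id3 w.
Definition Wm (w : seq 'I_3) : m3 int := foldr (fun i acc => mul3 (Rm i) acc) id3 w.

Lemma id_rep (F : fieldType) : [pchar F] =i pred0 -> @rep F id id3.
Proof.
move=> h; apply: (rep_of_lin h); first by split.
by move=> j; rewrite colF_I2 equiE; congr (I2 F _); case: (ord3_cases j) => ->; vm_compute.
Qed.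

Lemma gword_rep (F : fieldType) : [pchar F] =i pred0 -> forall w,
  @rep F (gword w) (Gm w).
Proof.
move=> h; elim=> [|l w IH] /=; first exact: id_rep.
exact: (rep_comp h (letter_rep h l) IH).
Qed.

Lemma wword_rep (F : fieldType) : [pchar F] =i pred0 -> forall w,
  @rep F (wword w) (Wm w).
Proof.
move=> h; elim=> [|i w IH] /=; first exact: id_rep.
exact: (rep_comp h (refl_rep h i) IH).
Qed.

Lemma rep_eq (F : fieldType) f g A : @rep F f A -> @rep F g A -> eqsl f g.
Proof. by move=> hf hg v hv; rewrite hf // hg. Qed.

Lemma rep_eqsl (F : fieldType) f g A : @eqsl F f g -> @rep F g A -> @rep F f A.
Proof. by move=> hfg hg v hv; rewrite hfg // hg. Qed.

Lemma eqsl_trans (F : fieldType) f g k : @eqsl F f g -> eqsl g k -> eqsl f k.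
Proof. by move=> h1 h2 v hv; rewrite h1 // h2. Qed.

Lemma eqsl_sym (F : fieldType) f g : @eqsl F f g -> eqsl g f.
Proof. by move=> h1 v hv; rewrite h1. Qed.

Definition pres (F : fieldType) (f : 'M[F]_2 -> 'M[F]_2) := forall v, in_sl2 v -> in_sl2 (f v).

Lemma eqsl_comp (F : fieldType) f f' g g' : @eqsl F f f' -> eqsl g g' -> pres g ->
  eqsl (f \o g) (f' \o g').
Proof. by move=> h1 h2 hg v hv /=; rewrite -h2 //; apply: h1; apply: hg. Qed.

Lemma rep_pres (F : fieldType) f A : @rep F f A -> pres f.
Proof. by move=> hf v hv; apply: rep_sl2 hf hv. Qed.

Lemma gword_cat (F : fieldType) u w v : @gword F (u ++ w) v = gword u (gword w v).
Proof. by elim: u => [|l u IH] //=; rewrite IH. Qed.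
Lemma wword_cat (F : fieldType) u w v : @wword F (u ++ w) v = wword u (wword w v).
Proof. by elim: u => [|l u IH] //=; rewrite IH. Qed.

Lemma even_ind (T : Type) (P : seq T -> Prop) : P [::] ->
  (forall a b w, P w -> P [:: a, b & w]) -> forall w, ~~ odd (size w) -> P w.
Proof.
move=> h0 h2 w.
suff: (~~ odd (size w) -> P w) /\ (forall a, ~~ odd (size (a :: w)) -> P (a :: w)) by case.
elim: w => [|b w [IH1 IH2]]; split.
- by [].
- by [].
- by move=> hw; apply: IH2.
- by move=> a /= hw; apply: h2; apply: IH1; move: hw; rewrite negbK.
Qed.

Lemma eqsl_pt (F : fieldType) (f g : 'M[F]_2 -> 'M[F]_2) : (forall v, f v = g v) -> eqsl f g.
Proof. by move=> h v _. Qed.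

Lemma pres_comp (F : fieldType) (f g : 'M[F]_2 -> 'M[F]_2) : pres f -> pres g -> pres (f \o g).
Proof. by move=> hf hg v hv; apply: hf; apply: hg. Qed.

Definition pw (a b : 'I_3) : seq ('I_3 * bool) :=
  match (a : nat), (b : nat) with
  | 0, 1 => [:: (o2, true); (o2, true)]
  | 0, 2 => [:: (o1, false); (o1, false)]
  | 1, 0 => [:: (o2, false); (o2, false)]
  | 1, 2 => [:: (o0, true); (o0, true)]
  | 2, 0 => [:: (o1, true); (o1, true)]
  | 2, 1 => [:: (o0, false); (o0, false)]
  | _, _ => [::]
  end.

Lemma pw_ok a b : Wm [:: a; b] = Gm (pw a b).
Proof. by case: (ord3_cases a) => ->; case: (ord3_cases b) => ->; vm_compute. Qed.

Lemma W_in_G (F : fieldType) : [pchar F] =i pred0 -> forall w,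
  ~~ odd (size w) -> exists gw, @eqsl F (wword w) (gword gw).
Proof.
move=> h; apply: even_ind.
  by exists [::]; apply: eqsl_pt.
move=> a b w [gw hw]; exists (pw a b ++ gw).
apply: (@eqsl_trans _ _ (wword [:: a; b] \o wword w)); first by apply: eqsl_pt.
apply: (@eqsl_trans _ _ (gword (pw a b) \o gword gw)); last by apply: eqsl_pt => v; rewrite gword_cat.
apply: eqsl_comp => //; last exact: rep_pres (wword_rep h w).
by apply: rep_eq (wword_rep h _) _; rewrite pw_ok; apply: gword_rep.
Qed.

Definition ctab (l : 'I_3 * bool) (i : nat) : nat * seq 'I_3 :=
  match (l.1 : nat), l.2, i with
  | 0, true, 0 => (1%N, [:: o0; o2])
  | 0, true, 1 => (0%N, [:: o1; o0])
  | 0, true, 2 => (4%N, [:: o0; o1])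
  | 0, true, 3 => (5%N, [:: ])
  | 0, true, 4 => (2%N, [:: ])
  | 0, true, _ => (3%N, [:: o2; o0])
  | 0, false, 0 => (1%N, [:: o0; o1])
  | 0, false, 1 => (0%N, [:: o2; o0])
  | 0, false, 2 => (4%N, [:: ])
  | 0, false, 3 => (5%N, [:: o0; o2])
  | 0, false, 4 => (2%N, [:: o1; o0])
  | 0, false, _ => (3%N, [:: ])
  | 1, true, 0 => (2%N, [:: o1; o0])
  | 1, true, 1 => (5%N, [:: ])
  | 1, true, 2 => (0%N, [:: o2; o1])
  | 1, true, 3 => (4%N, [:: o1; o2])
  | 1, true, 4 => (3%N, [:: ])
  | 1, true, _ => (1%N, [:: o0; o1])
  | 1, false, 0 => (2%N, [:: o1; o2])
  | 1, false, 1 => (5%N, [:: o1; o0])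
  | 1, false, 2 => (0%N, [:: o0; o1])
  | 1, false, 3 => (4%N, [:: ])
  | 1, false, 4 => (3%N, [:: o2; o1])
  | 1, false, _ => (1%N, [:: ])
  | _, true, 0 => (3%N, [:: o2; o1])
  | _, true, 1 => (4%N, [:: o2; o0])
  | _, true, 2 => (5%N, [:: ])
  | _, true, 3 => (0%N, [:: o0; o2])
  | _, true, 4 => (1%N, [:: ])
  | _, true, _ => (2%N, [:: o1; o2])
  | _, false, 0 => (3%N, [:: o2; o0])
  | _, false, 1 => (4%N, [:: ])
  | _, false, 2 => (5%N, [:: o2; o1])
  | _, false, 3 => (0%N, [:: o1; o2])
  | _, false, 4 => (1%N, [:: o0; o2])
  | _, false, _ => (2%N, [:: ])
  end.
Definition ntab (l : 'I_3 * bool) (u : 'I_3) : seq 'I_3 :=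
  match (l.1 : nat), l.2, (u : nat) with
  | 0, true, 0 => [:: o1; o0; o1]
  | 0, true, 1 => [:: o1; o2; o1]
  | 0, true, _ => [:: o1]
  | 0, false, 0 => [:: o2; o0; o2]
  | 0, false, 1 => [:: o2]
  | 0, false, _ => [:: o2; o1; o2]
  | 1, true, 0 => [:: o2]
  | 1, true, 1 => [:: o2; o1; o2]
  | 1, true, _ => [:: o2; o0; o2]
  | 1, false, 0 => [:: o0; o2; o0]
  | 1, false, 1 => [:: o0; o1; o0]
  | 1, false, _ => [:: o0]
  | _, true, 0 => [:: o0; o1; o0]
  | _, true, 1 => [:: o0]
  | _, true, _ => [:: o0; o2; o0]
  | _, false, 0 => [:: o1]
  | _, false, 1 => [:: o1; o0; o1]
  | _, false, _ => [:: o1; o2; o1]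
  end.

Definition repw (k : nat) : seq ('I_3 * bool) :=
  match k with
  | 0 => [::]
  | 1 => [:: (o1, true); (o2, true); (o1, true)]
  | 2 => [:: (o2, true); (o0, true); (o2, true)]
  | 3 => [:: (o0, true); (o1, true); (o0, true)]
  | 4 => [:: (o0, true); (o1, true)]
  | _ => [:: (o0, true); (o1, true); (o0, true); (o1, true)]
  end.

Lemma ord6_cases (i : 'I_6) : exists2 k, (k < 6)%N & i = inord k.
Proof. by exists (i : nat); rewrite ?ltn_ord // inord_val. Qed.

Lemma coset_rep_eq (F : fieldType) (i : 'I_6) v : @coset_rep F i v = gword (repw i) v.
Proof. by case: i => [[|[|[|[|[|[|i]]]]]] Hi]. Qed.

Lemma ctab_ok l (i : 'I_6) :
  [/\ ((ctab l i).1 < 6)%N, ~~ odd (size (ctab l i).2) &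
   mul3 (Al l) (Gm (repw i)) = mul3 (Gm (repw (ctab l i).1)) (Wm (ctab l i).2)].
Proof.
case: l => a b; case: (ord3_cases a) => ->; case: b;
  case: i => [[|[|[|[|[|[|i]]]]]] Hi] //; vm_compute; split => //.
Qed.

Lemma ntab_ok l u :
  odd (size (ntab l u)) /\ mul3 (Al l) (Rm u) = mul3 (Wm (ntab l u)) (Al l).
Proof.
case: l => a b; case: (ord3_cases a) => ->; case: b;
  case: (ord3_cases u) => ->; vm_compute; split => //.
Qed.

Lemma eqsl_refl (F : fieldType) (f : 'M[F]_2 -> 'M[F]_2) : eqsl f f.
Proof. by []. Qed.

Lemma coset_rep_rep (F : fieldType) : [pchar F] =i pred0 -> forall i : 'I_6,
  @rep F (coset_rep i) (Gm (repw i)).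
Proof.
move=> h i; apply: rep_eqsl (gword_rep h _).
by apply: eqsl_pt => v; rewrite coset_rep_eq.
Qed.

Lemma coset_step (F : fieldType) : [pchar F] =i pred0 -> forall l (i : 'I_6),
  exists (j : 'I_6) v, ~~ odd (size v) /\
    @eqsl F (gletter l \o coset_rep i) (coset_rep j \o wword v).
Proof.
move=> h l i; have [hj hv hm] := ctab_ok l i.
exists (inord (ctab l i).1), (ctab l i).2; split => //.
apply: rep_eq (rep_comp h (letter_rep h l) (coset_rep_rep h i)) _.
rewrite hm; apply: (rep_comp h _ (wword_rep h _)).
by have := coset_rep_rep h (inord (ctab l i).1); rewrite inordK.
Qed.

Lemma coset_decomp (F : fieldType) : [pchar F] =i pred0 -> forall gw,
  exists (i : 'I_6) ww, ~~ odd (size ww) /\ @eqsl F (gword gw) (coset_rep i \o wword ww).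
Proof.
move=> h; elim=> [|l gw [i [ww [hww IH]]]].
  by exists ord0, [::]; split => //; apply: eqsl_pt.
have [j [v [hv hs]]] := coset_step h l i.
exists j, (v ++ ww); split; first by rewrite size_cat oddD negb_add (negbTE hv) (negbTE hww).
apply: (@eqsl_trans _ _ (gletter l \o (coset_rep i \o wword ww))).
  exact: (eqsl_comp (eqsl_refl _) IH (rep_pres (gword_rep h gw))).
apply: (@eqsl_trans _ _ ((gletter l \o coset_rep i) \o wword ww)); first exact: eqsl_pt.
apply: (@eqsl_trans _ _ ((coset_rep j \o wword v) \o wword ww)).
  exact: (eqsl_comp hs (eqsl_refl _) (rep_pres (wword_rep h ww))).
by apply: eqsl_pt => x /=; rewrite wword_cat.
Qed.

Lemma conjW (F : fieldType) : [pchar F] =i pred0 -> forall l w,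
  exists w', odd (size w') = odd (size w) /\
    @eqsl F (gletter l \o wword w) (wword w' \o gletter l).
Proof.
move=> h l; elim=> [|u w [w' [hs IH]]].
  by exists [::]; split => //; apply: eqsl_pt.
have [hn hm] := ntab_ok l u.
exists (ntab l u ++ w'); split; first by rewrite size_cat oddD hn hs.
have hlu : eqsl (gletter l \o refl (equi F u)) (wword (ntab l u) \o gletter l).
  apply: rep_eq (rep_comp h (letter_rep h l) (refl_rep h u)) _.
  by rewrite hm; apply: (rep_comp h (wword_rep h _) (letter_rep h l)).
apply: (@eqsl_trans _ _ ((gletter l \o refl (equi F u)) \o wword w)); first exact: eqsl_pt.
apply: (@eqsl_trans _ _ ((wword (ntab l u) \o gletter l) \o wword w)).
  exact: (eqsl_comp hlu (eqsl_refl _) (rep_pres (wword_rep h w))).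
apply: (@eqsl_trans _ _ (wword (ntab l u) \o (wword w' \o gletter l))).
  apply: (@eqsl_trans _ _ (wword (ntab l u) \o (gletter l \o wword w))); first exact: eqsl_pt.
  apply: (eqsl_comp (eqsl_refl _) IH).
  exact: (pres_comp (rep_pres (letter_rep h l)) (rep_pres (wword_rep h w))).
by apply: eqsl_pt => x /=; rewrite wword_cat.
Qed.

Lemma normalW (F : fieldType) : [pchar F] =i pred0 -> forall gw ww,
  exists ww', odd (size ww') = odd (size ww) /\
    @eqsl F (gword gw \o wword ww) (wword ww' \o gword gw).
Proof.
move=> h; elim=> [|l gw IH] ww.
  by exists ww; split => //; apply: eqsl_pt.
have [ww1 [hs1 h1]] := IH ww.
have [ww2 [hs2 h2]] := conjW h l ww1.
exists ww2; split; first by rewrite hs2 hs1.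
apply: (@eqsl_trans _ _ (gletter l \o (gword gw \o wword ww))); first exact: eqsl_pt.
apply: (@eqsl_trans _ _ (gletter l \o (wword ww1 \o gword gw))).
  apply: (eqsl_comp (eqsl_refl _) h1).
  exact: (pres_comp (rep_pres (gword_rep h gw)) (rep_pres (wword_rep h ww))).
apply: (@eqsl_trans _ _ ((gletter l \o wword ww1) \o gword gw)); first exact: eqsl_pt.
apply: (@eqsl_trans _ _ ((wword ww2 \o gletter l) \o gword gw)).
  exact: (eqsl_comp h2 (eqsl_refl _) (rep_pres (gword_rep h gw))).
exact: eqsl_pt.
Qed.

Lemma intr_inj0 (F : fieldType) : [pchar F] =i pred0 -> forall m n : int,
  (m%:~R : F) = n%:~R -> m = n.
Proof.
move=> h m n e; apply/eqP; rewrite -subr_eq0; apply/eqP.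
move: e; move/eqP; rewrite -subr_eq0 -intrB; move: (m - n) => k.
move/pcharf0P: h => h.
case: k => k /=.
- by change (((k%:R : F) == 0) -> Posz k = 0); rewrite h => /eqP ->.
- rewrite NegzE intrN oppr_eq0.
  by change (((k.+1%:R : F) == 0) -> - (Posz k.+1) = 0); rewrite h.
Qed.

Lemma I2_inj (F : fieldType) : [pchar F] =i pred0 -> forall P Q,
  I2 F P = I2 F Q -> P = Q.
Proof.
move=> h [a b c d] [a' b' c' d'] e.
have e00 := congr1 (fun M : 'M[F]_2 => M ord0 ord0) e.
have e01 := congr1 (fun M : 'M[F]_2 => M ord0 ord_max) e.
have e10 := congr1 (fun M : 'M[F]_2 => M ord_max ord0) e.
have e11 := congr1 (fun M : 'M[F]_2 => M ord_max ord_max) e.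
move: e00 e01 e10 e11; rewrite /I2 /mx2 !mxE /= => /(intr_inj0 h) -> /(intr_inj0 h) ->
  /(intr_inj0 h) -> /(intr_inj0 h) ->.
by [].
Qed.

Lemma L_equi (F : fieldType) : [pchar F] =i pred0 -> forall A j,
  @L F A (equi F j) = colF F A j.
Proof.
move=> h A j; rewrite /L; under eq_bigr do rewrite (cc_equi h).
rewrite sum3; case: (ord3_cases j) => -> /=; by rewrite !scale1r !scale0r ?addr0 ?add0r.
Qed.

Lemma colI_inj A B j : colI A j = colI B j ->
  [/\ get A o0 j = get B o0 j, get A o1 j = get B o1 j & get A o2 j = get B o2 j].
Proof.
move=> e.
have e00 := congr1 p00 e; have e01 := congr1 p01 e; have e10 := congr1 p10 e.
move: e00 e01 e10; rewrite /colI /= !mulr0 !addr0 !add0r !mulr1 !mulrN1.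
move=> e00 /(mulIf _) e01 /(mulIf _) e10.
have hb := e01 isT; have hc := e10 isT.
split => //.
by move: e00; rewrite hb hc => /addIr /addIr.
Qed.

Lemma rep_inj (F : fieldType) : [pchar F] =i pred0 -> forall f A B,
  @rep F f A -> rep f B -> A = B.
Proof.
move=> h f A B hA hB.
have e : forall j, colI A j = colI B j.
  move=> j; apply: (I2_inj h); rewrite -!colF_I2 -!(L_equi h).
  by rewrite -hA ?hB //; rewrite /in_sl2 tr_equi.
have ej : forall i j, get A i j = get B i j.
  move=> i j; have [h0 h1 h2] := colI_inj (e j).
  by case: (ord3_cases i) => ->.
case: A B ej {hA hB e} => ? ? ? ? ? ? ? ? ? [? ? ? ? ? ? ? ? ?] ej.
by congr M3; [exact: (ej o0 o0) | exact: (ej o0 o1) | exact: (ej o0 o2)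
  | exact: (ej o1 o0) | exact: (ej o1 o1) | exact: (ej o1 o2)
  | exact: (ej o2 o0) | exact: (ej o2 o1) | exact: (ej o2 o2)].
Qed.

Definition pb (n : int) : bool := (n%:~R : 'Z_2) == 1.

Lemma pbD m n : pb (m + n) = pb m (+) pb n.
Proof.
rewrite /pb intrD; move: (m%:~R : 'Z_2) (n%:~R : 'Z_2) => a b.
by case: a => [[|[|a]] Ha] //; case: b => [[|[|b]] Hb].
Qed.

Lemma pbM m n : pb (m * n) = pb m && pb n.
Proof.
rewrite /pb intrM; move: (m%:~R : 'Z_2) (n%:~R : 'Z_2) => a b.
by case: a => [[|[|a]] Ha] //; case: b => [[|[|b]] Hb].
Qed.

Definition mul3b (A B : m3 bool) : m3 bool :=
  let f i j := (get A i o0 && get B o0 j) (+) (get A i o1 && get B o1 j) (+) (get A i o2 && get B o2 j) in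
  M3 (f o0 o0) (f o0 o1) (f o0 o2) (f o1 o0) (f o1 o1) (f o1 o2) (f o2 o0) (f o2 o1) (f o2 o2).

Definition par (A : m3 int) : m3 bool :=
  M3 (pb (a00 A)) (pb (a01 A)) (pb (a02 A)) (pb (a10 A)) (pb (a11 A)) (pb (a12 A))
     (pb (a20 A)) (pb (a21 A)) (pb (a22 A)).

Lemma par_mul A B : par (mul3 A B) = mul3b (par A) (par B).
Proof.
case: A => ? ? ? ? ? ? ? ? ?; case: B => ? ? ? ? ? ? ? ? ?.
by rewrite /par /mul3 /= !pbD !pbM.
Qed.

Definition I3z : m3 bool := par id3.

Lemma par_W w : par (Wm w) = I3z.
Proof.
elim: w => [|u w IH] //=; rewrite par_mul IH.
by case: (ord3_cases u) => ->; vm_compute.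
Qed.

Definition Pk (k : nat) : m3 bool := par (Gm (repw k)).

Lemma Pk_I3z (i : 'I_6) : mul3b (Pk i) I3z = Pk i.
Proof. by case: i => [[|[|[|[|[|[|i]]]]]] Hi] //; vm_compute. Qed.

Definition rn (P : m3 bool) (t : 'I_3) : nat :=
  if get P t o0 then 0%N else if get P t o1 then 1%N else 2%N.
Definition rnl (P : m3 bool) := [:: rn P o0; rn P o1; rn P o2].

Lemma rnl_inj (i j : 'I_6) : rnl (Pk i) = rnl (Pk j) -> i = j.
Proof.
case: i => [[|[|[|[|[|[|i]]]]]] Hi] //; case: j => [[|[|[|[|[|[|j]]]]]] Hj] //;
  vm_compute; try (by move=> _; apply: val_inj); by case.
Qed.

Definition rnN (P : m3 bool) (t : nat) : nat :=
  match t with 0 => rn P o0 | 1 => rn P o1 | _ => rn P o2 end.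

Lemma rn_lt3 P t : (rn P t < 3)%N.
Proof. by rewrite /rn; case: ifP => //; case: ifP. Qed.

Lemma rnN_rn P (t : 'I_3) : rn P t = rnN P t.
Proof. by case: (ord3_cases t) => ->. Qed.

Definition rr (P : m3 bool) (t : 'I_3) : 'I_3 := inord (rn P t).

Lemma rrE P t : (rr P t : nat) = rn P t.
Proof. by rewrite /rr inordK // rn_lt3. Qed.

Lemma rn_inj_closed (i : 'I_6) (t1 t2 : 'I_3) : rn (Pk i) t1 = rn (Pk i) t2 -> t1 = t2.
Proof.
case: (ord3_cases t1) => ->; case: (ord3_cases t2) => -> //;
  case: i => [[|[|[|[|[|[|i]]]]]] Hi] //; vm_compute; by [].
Qed.

Lemma rr_inj (i : 'I_6) : injective (rr (Pk i)).
Proof. by move=> t1 t2 /(congr1 (@nat_of_ord 3)); rewrite !rrE; apply: rn_inj_closed. Qed.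

Lemma rn_mul_closed (i j : 'I_6) (t : 'I_3) :
  rn (mul3b (Pk i) (Pk j)) t = rnN (Pk j) (rn (Pk i) t).
Proof.
case: (ord3_cases t) => ->;
  case: i => [[|[|[|[|[|[|i]]]]]] Hi] //; case: j => [[|[|[|[|[|[|j]]]]]] Hj] //; vm_compute; by [].
Qed.

Lemma rr_mul (i j : 'I_6) t : rr (mul3b (Pk i) (Pk j)) t = rr (Pk j) (rr (Pk i) t).
Proof. by apply: ord_inj; rewrite !rrE rn_mul_closed (rnN_rn (Pk j)) rrE. Qed.

Definition permof (h : 'I_3 -> 'I_3) : 'S_3 :=
  match injectiveP h with ReflectT pf => perm pf | ReflectF _ => 1%g end.

Lemma permofE h : injective h -> permof h =1 h.
Proof. by move=> hi x; rewrite /permof; case: injectiveP => // pf; rewrite permE. Qed.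

Lemma rr_id_closed (i : 'I_6) : (forall t, rr (Pk i) t = t) -> i = ord0.
Proof.
move=> H; apply: rnl_inj.
have e : forall t, rn (Pk i) t = t by move=> t; have := congr1 (@nat_of_ord 3) (H t); rewrite rrE.
by rewrite /rnl (e o0) (e o1) (e o2); vm_compute.
Qed.

Definition phi (F : fieldType) (g : 'M[F]_2 -> 'M[F]_2) : 'S_3 :=
  match excluded_middle_informative (exists A, @rep F g A) with
  | left H => permof (rr (par (proj1_sig (constructive_indefinite_description _ H))))
  | right _ => 1%g
  end.

Lemma phi_spec (F : fieldType) : [pchar F] =i pred0 -> forall g A,
  @rep F g A -> phi g = permof (rr (par A)).
Proof.
move=> h g A hA; rewrite /phi; case: excluded_middle_informative => [H|H]; last first.
  by exfalso; apply: H; exists A.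
case: constructive_indefinite_description => A' hA' /=.
by rewrite (rep_inj h hA' hA).
Qed.

Lemma G_class (F : fieldType) : [pchar F] =i pred0 -> forall g, @inG F g ->
  exists (i : 'I_6) A, [/\ rep g A, par A = Pk i &
    exists ww, ~~ odd (size ww) /\ eqsl g (coset_rep i \o wword ww)].
Proof.
move=> h g [gw hg].
have [i [ww [hww hd]]] := coset_decomp h gw.
have hgd := eqsl_trans hg hd.
exists i, (mul3 (Gm (repw i)) (Wm ww)); split.
- exact: rep_eqsl hgd (rep_comp h (coset_rep_rep h i) (wword_rep h ww)).
- by rewrite par_mul par_W Pk_I3z.
- by exists ww.
Qed.

Lemma rr_I3z t : rr I3z t = t.
Proof. by apply: ord_inj; rewrite rrE; case: (ord3_cases t) => ->; vm_compute. Qed.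

Lemma permof_id (h : 'I_3 -> 'I_3) : (forall t, h t = t) -> permof h = 1%g.
Proof.
move=> H; have hi : injective h by move=> x y; rewrite !H.
by apply/permP => t; rewrite permofE // perm1 H.
Qed.

Unset Implicit Arguments.
Theorem proposition7p6 (F : fieldType) (charF0 : [pchar F] =i pred0) :
  (* W^+ is contained in G *)
  (forall f, inWp f -> @inG F f) /\
  (* W^+ is normal in G : g W^+ g^{-1} \subset W^+ *)
  (forall g w, inG g -> inWp w ->
     exists w', @inWp F w' /\ eqsl (g \o w) (w' \o g)) /\
  (* every element of G lies in one of the six cosets *)
  (forall g, inG g -> exists (i : 'I_6) w, @inWp F w /\ eqsl g (coset_rep i \o w)) /\
  (* the six cosets are pairwise distinct *)
  (forall i j : 'I_6, i != j ->
     ~ exists w, @inWp F w /\ eqsl (coset_rep j) (coset_rep i \o w)) /\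
  (* G / W^+ is isomorphic to S_3 : a surjective homomorphism G -> S_3
     with kernel W^+ *)
  (exists phi : ('M[F]_2 -> 'M[F]_2) -> 'S_3,
     (forall g h, inG g -> inG h -> eqsl g h -> phi g = phi h) /\
     (forall g h, inG g -> inG h -> phi (g \o h) = (phi g * phi h)%g) /\
     (forall s : 'S_3, exists g, inG g /\ phi g = s) /\
     (forall g, inG g -> (phi g = 1%g <-> inWp g))).
Proof.
have h := charF0.
split.
  move=> f [w [hw hf]]; have [gw hgw] := W_in_G h hw.
  by exists gw; apply: eqsl_trans hf hgw.
split.
  move=> g w [gw hg] [ww [hww hw]].
  have [ww' [hs hn]] := normalW h gw ww.
  exists (wword ww'); split; first by exists ww'; rewrite hs.
  apply: (@eqsl_trans _ _ (gword gw \o wword ww)).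
    exact: (eqsl_comp hg hw (rep_pres (rep_eqsl hw (wword_rep h ww)))).
  apply: eqsl_trans hn _.
  exact: (eqsl_comp (eqsl_refl _) (eqsl_sym hg) (rep_pres (gword_rep h gw))).
split.
  move=> g hg; have [i [A [_ _ [ww [hww hd]]]]] := G_class h hg.
  by exists i, (wword ww); split => //; exists ww.
split.
  move=> i j hij [w [[ww [hww hw]] he]].
  have r1 := rep_comp h (coset_rep_rep h i) (rep_eqsl hw (wword_rep h ww)).
  have r2 := rep_eqsl he r1.
  have e := rep_inj h (coset_rep_rep h j) r2.
  have ep : Pk j = Pk i by rewrite /Pk e par_mul par_W Pk_I3z.
  have := rnl_inj (congr1 rnl ep) => eij.
  by move: hij; rewrite eij eqxx.
exists (@phi F); split.
  move=> g g' hg _ he; have [i [A [hA _ _]]] := G_class h hg.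
  by rewrite (phi_spec h hA) (phi_spec h (rep_eqsl (eqsl_sym he) hA)).
split.
  move=> g g' hg hg'.
  have [i [A [hA pA _]]] := G_class h hg.
  have [j [B [hB pB _]]] := G_class h hg'.
  rewrite (phi_spec h (rep_comp h hA hB)) (phi_spec h hA) (phi_spec h hB).
  rewrite par_mul pA pB.
  have hinj : injective (rr (mul3b (Pk i) (Pk j))).
    by move=> x y; rewrite !rr_mul => /rr_inj /rr_inj.
  by apply/permP => t; rewrite permM !permofE ?rr_mul //; apply: rr_inj.
split.
  move=> s.
  pose f := fun k : 'I_6 => permof (rr (Pk k)).
  have finj : injective f.
    move=> k1 k2 e; apply: rnl_inj.
    have e' : forall t, rr (Pk k1) t = rr (Pk k2) t.
      by move=> t; rewrite -(permofE (@rr_inj k1)) -(permofE (@rr_inj k2)) -/(f k1) e.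
    by rewrite /rnl -!rrE !e'.
  have hc : (#|{perm 'I_3}| <= #|'I_6|)%N by rewrite card_Sn card_ord.
  have := inj_card_onto finj hc s.
  case/codomP => k ->.
  exists (coset_rep k); split.
    by exists (repw k); apply: eqsl_pt => v; rewrite coset_rep_eq.
  by rewrite (phi_spec h (coset_rep_rep h k)).
move=> g hg; split.
  have [i [A [hA pA [ww [hww hd]]]]] := G_class h hg.
  rewrite (phi_spec h hA) pA => e1.
  have hi : i = ord0.
    apply: rr_id_closed => t.
    by rewrite -(permofE (@rr_inj i) t) e1 perm1.
  exists ww; split => //; apply: eqsl_trans hd _.
  by rewrite hi; apply: eqsl_pt.
move=> [ww [hww hw]].
rewrite (phi_spec h (rep_eqsl hw (wword_rep h ww))) par_W.
exact: permof_id rr_I3z.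
Qed.
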